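(* The relations $\equiv_{\tt CS}$ and $\equiv_{\tt o}$ are strong bisimulations for $(\mathcal T,\to_{\lambda j})$, where $\mathcal T$ is the set of $\lambda j$-terms.
   Context: $\lambda j$-terms are generated by $t,u::= x\mid \lambda x.t\mid t\,u\mid t[x/u]$ ($x$ ranging over variables); $\lambda x.t$ and $t[x/u]$ bind $x$ in $t$ (not in $u$), and terms are considered modulo $\alpha$-conversion. $\mathrm{fv}(t)$ is the set of free variables, $t\{x/u\}$ is capture-avoiding meta-level substitution, and $|t|_x$ is the number of free occurrences of $x$ in $t$. If $|t|_x=n\ge2$, $t_{[y]_x}$ denotes any term obtained from $t$ by replacing $k$ of the free occurrences of $x$ by a fresh variable $y$, for some $1\le k\le n-1$. ${\tt L}$ denotes a (possibly empty) list of jumps $[x_1/u_1]\dots[x_k/u_k]$. The rewriting rules, closed under all contexts, are: $({\tt dB})$ $(\lambda x.t){\tt L}\,u\to t[x/u]{\tt L}$ where no $x_i$ of ${\tt L}$ is free in $u$; $({\tt w})$ $t[x/u]\to t$ if $|t|_x=0$; $({\tt d})$ $t[x/u]\to t\{x/u\}$ if $|t|_x=1$; $({\tt c})$ $t[x/u]\to t_{[y]_x}[x/u][y/u]$ if $|t|_x\ge2$, $y$ fresh. $\to_{\lambda j}$ is the union of all four. $\equiv_{\tt CS}$ is the smallest equivalence closed under contexts containing $t[x/s][y/v]\sim t[y/v][x/s]$ whenever $x\notin\mathrm{fv}(v)$ and $y\notin\mathrm{fv}(s)$. $\equiv_{\tt o}$ (graphical equivalence) is the smallest equivalence closed under contexts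 containing that equation together with $\lambda y.(t[x/s])\sim(\lambda y.t)[x/s]$ if $y\notin\mathrm{fv}(s)$, and $t[x/s]\,v\sim(t\,v)[x/s]$ if $x\notin\mathrm{fv}(v)$. A strong bisimulation for a reduction system $(S,\to)$ is a relation ${\tt E}\subseteq S\times S$ such that whenever $s\,{\tt E}\,t$: if $s\to s'$ then there is $t'$ with $t\to t'$ and $s'\,{\tt E}\,t'$, and if $t\to t'$ then there is $s'$ with $s\to s'$ and $s'\,{\tt E}\,t'$. *)

(* Defs.v *)
(* lambda-j terms modulo alpha-conversion, represented with
   de Bruijn indices (each de Bruijn term is exactly one alpha-class). *)
From Stdlib Require Import Arith List.

(* t ::= x | \x.t | t u | t[x/u]   ;  in [Sub t u] the index 0 of [t] is x. *)
Inductive term : Type :=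
| Var : nat -> term
| Lam : term -> term
| App : term -> term -> term
| Sub : term -> term -> term.

Fixpoint lift (c : nat) (t : term) : term :=
  match t with
  | Var n => if c <=? n then Var (S n) else Var n
  | Lam t1 => Lam (lift (S c) t1)
  | App t1 t2 => App (lift c t1) (lift c t2)
  | Sub t1 t2 => Sub (lift (S c) t1) (lift c t2)
  end.

Fixpoint liftn (k : nat) (u : term) : term :=
  match k with
  | 0 => u
  | S k' => lift 0 (liftn k' u)
  end.

(* capture-avoiding meta-level substitution t{k/u} (u is seen from the
   context of the binder of k); indices above k are decremented *)
Fixpoint subst (k : nat) (u : term) (t : term) : term :=
  match t with
  | Var n => if n <? k then Var n else if n =? k then u else Var (pred n)
  | Lam t1 => Lam (subst (S k) (lift 0 u) t1)
  | App t1 t2 => App (subst k u t1) (subst k u t2)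
  | Sub t1 t2 => Sub (subst (S k) (lift 0 u) t1) (subst k u t2)
  end.

Fixpoint occ (k : nat) (t : term) : nat :=
  match t with
  | Var n => if n =? k then 1 else 0
  | Lam t1 => occ (S k) t1
  | App t1 t2 => occ k t1 + occ k t2
  | Sub t1 t2 => occ (S k) t1 + occ k t2
  end.

Fixpoint swap (d : nat) (t : term) : term :=
  match t with
  | Var n => if n =? d then Var (S d) else if n =? S d then Var d else Var n
  | Lam t1 => Lam (swap (S d) t1)
  | App t1 t2 => App (swap d t1) (swap d t2)
  | Sub t1 t2 => Sub (swap (S d) t1) (swap d t2)
  end.

(* split d t t' : t' is t seen under one extra binder y placed just outside
   the binder of x (x = index d, y = index d+1 in t'), where each free
   occurrence of x is either kept as x or replaced by y. *)
Inductive split : nat -> term -> term -> Prop :=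
| split_lt : forall d n, n < d -> split d (Var n) (Var n)
| split_gt : forall d n, d < n -> split d (Var n) (Var (S n))
| split_keep : forall d, split d (Var d) (Var d)
| split_move : forall d, split d (Var d) (Var (S d))
| split_lam : forall d t t', split (S d) t t' -> split d (Lam t) (Lam t')
| split_app : forall d t t' u u', split d t t' -> split d u u' ->
    split d (App t u) (App t' u')
| split_sub : forall d t t' u u', split (S d) t t' -> split d u u' ->
    split d (Sub t u) (Sub t' u').

(* t L  with L = [x1/u1]...[xk/uk] *)
Definition jumps (t : term) (L : list term) : term :=
  fold_left Sub L t.

Inductive lj_root : term -> term -> Prop :=
| r_dB : forall t L u,
    lj_root (App (jumps (Lam t) L) u) (jumps (Sub t (liftn (length L) u)) L)
| r_w : forall t u, occ 0 t = 0 -> lj_root (Sub t u) (subst 0 u t)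
| r_d : forall t u, occ 0 t = 1 -> lj_root (Sub t u) (subst 0 u t)
| r_c : forall t t' u, 2 <= occ 0 t -> split 0 t t' ->
    1 <= occ 1 t' -> occ 1 t' <= occ 0 t - 1 ->
    lj_root (Sub t u) (Sub (Sub t' (lift 0 u)) u).

Inductive lj_step : term -> term -> Prop :=
| s_root : forall t t', lj_root t t' -> lj_step t t'
| s_lam : forall t t', lj_step t t' -> lj_step (Lam t) (Lam t')
| s_appl : forall t t' u, lj_step t t' -> lj_step (App t u) (App t' u)
| s_appr : forall t u u', lj_step u u' -> lj_step (App t u) (App t u')
| s_subl : forall t t' u, lj_step t t' -> lj_step (Sub t u) (Sub t' u)
| s_subr : forall t u u', lj_step u u' -> lj_step (Sub t u) (Sub t u').

Inductive ctx_equiv (R : term -> term -> Prop) : term -> term -> Prop :=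
| e_base : forall t u, R t u -> ctx_equiv R t u
| e_refl : forall t, ctx_equiv R t t
| e_sym : forall t u, ctx_equiv R t u -> ctx_equiv R u t
| e_trans : forall t u v, ctx_equiv R t u -> ctx_equiv R u v -> ctx_equiv R t v
| e_lam : forall t t', ctx_equiv R t t' -> ctx_equiv R (Lam t) (Lam t')
| e_appl : forall t t' u, ctx_equiv R t t' -> ctx_equiv R (App t u) (App t' u)
| e_appr : forall t u u', ctx_equiv R u u' -> ctx_equiv R (App t u) (App t u')
| e_subl : forall t t' u, ctx_equiv R t t' -> ctx_equiv R (Sub t u) (Sub t' u)
| e_subr : forall t u u', ctx_equiv R u u' -> ctx_equiv R (Sub t u) (Sub t u').

(* t[x/s][y/v] ~ t[y/v][x/s]  (y not free in s; x not free in v is automatic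
   modulo alpha on the left) *)
Inductive cs_ax : term -> term -> Prop :=
| cs_perm : forall t s v,
    cs_ax (Sub (Sub t (lift 0 s)) v) (Sub (Sub (swap 0 t) (lift 0 v)) s).

Inductive o_ax : term -> term -> Prop :=
| o_cs : forall t u, cs_ax t u -> o_ax t u
(* \y.(t[x/s]) ~ (\y.t)[x/s]  if y not free in s *)
| o_lam : forall t s, o_ax (Lam (Sub t (lift 0 s))) (Sub (Lam (swap 0 t)) s)
(* t[x/s] v ~ (t v)[x/s]  if x not free in v *)
| o_app : forall t s v, o_ax (App (Sub t s) v) (Sub (App t (lift 0 v)) s).

Definition equiv_CS := ctx_equiv cs_ax.
Definition equiv_o := ctx_equiv o_ax.

Definition strong_bisimulation (step : term -> term -> Prop)
  (E : term -> term -> Prop) : Prop :=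
  forall s t, E s t ->
    (forall s', step s s' -> exists t', step t t' /\ E s' t') /\
    (forall t', step t t' -> exists s', step s s' /\ E s' t').

(* Main.v *)
Require Import Defs.
From Stdlib Require Import Arith List Lia.
Import ListNotations.


Definition up (f : nat -> nat) (n : nat) : nat :=
  match n with 0 => 0 | S m => S (f m) end.

Fixpoint ren (f : nat -> nat) (t : term) : term :=
  match t with
  | Var n => Var (f n)
  | Lam a => Lam (ren (up f) a)
  | App a b => App (ren f a) (ren f b)
  | Sub a b => Sub (ren (up f) a) (ren f b)
  end.

Fixpoint upn (k : nat) (f : nat -> nat) : nat -> nat :=
  match k with 0 => f | S k => up (upn k f) end.

Lemma ren_ext : forall t f g, (forall n, f n = g n) -> ren f t = ren g t.
Proof.
  induction t; intros f g H; simpl; f_equal; auto;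
  try (apply IHt || apply IHt1); intros [|n]; simpl; f_equal; auto.
Qed.

Lemma ren_ext_occ : forall t f g, (forall n, 0 < occ n t -> f n = g n) -> ren f t = ren g t.
Proof.
  induction t; intros f g H; simpl in *.
  - f_equal. apply H. rewrite Nat.eqb_refl. lia.
  - f_equal. apply IHt. intros [|m] Hm; simpl; auto.
  - f_equal; [apply IHt1|apply IHt2]; intros m Hm; apply H; lia.
  - f_equal; [apply IHt1|apply IHt2].
    + intros [|m] Hm; simpl; auto. f_equal. apply H. lia.
    + intros m Hm; apply H; lia.
Qed.

Lemma ren_comp : forall t f g, ren f (ren g t) = ren (fun n => f (g n)) t.
Proof.
  induction t; intros f g; simpl; f_equal; auto;
  try (rewrite IHt || rewrite IHt1); apply ren_ext; intros [|n]; reflexivity.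
Qed.

Lemma ren_id : forall t, ren (fun n => n) t = t.
Proof.
  induction t; simpl; f_equal; auto;
  try (rewrite <- IHt at 2 || rewrite <- IHt1 at 2); apply ren_ext; intros [|n]; reflexivity.
Qed.

Definition liftv (c n : nat) := if c <=? n then S n else n.
Lemma lift_ren : forall t c, lift c t = ren (liftv c) t.
Proof.
  induction t; intros c; simpl.
  - unfold liftv; destruct (c <=? n); reflexivity.
  - rewrite IHt. f_equal. apply ren_ext. intros [|m]; unfold liftv; simpl; auto; destruct (c <=? m); auto.
  - rewrite IHt1, IHt2; reflexivity.
  - rewrite IHt1, IHt2. f_equal. apply ren_ext. intros [|m]; unfold liftv; simpl; auto; destruct (c <=? m); auto.
Qed.
Lemma lift0_ren : forall t, lift 0 t = ren S t.
Proof. intros; rewrite lift_ren; apply ren_ext; reflexivity. Qed.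

Definition swapv (d n : nat) := if n =? d then S d else if n =? S d then d else n.
Lemma swap_ren : forall t d, swap d t = ren (swapv d) t.
Proof.
  induction t; intros d; simpl.
  - unfold swapv; destruct (n =? d); [|destruct (n =? S d)]; reflexivity.
  - rewrite IHt. f_equal. apply ren_ext. intros [|m]; unfold swapv; simpl; auto; destruct (m =? d); auto; destruct (m =? S d); auto.
  - rewrite IHt1, IHt2; reflexivity.
  - rewrite IHt1, IHt2. f_equal. apply ren_ext. intros [|m]; unfold swapv; simpl; auto; destruct (m =? d); auto; destruct (m =? S d); auto.
Qed.

Lemma liftn_ren : forall k u, liftn k u = ren (fun n => k + n) u.
Proof.
  induction k; intros u; simpl. symmetry; apply ren_id.
  rewrite IHk, lift0_ren, ren_comp. reflexivity.
Qed.

Definition merge (d n : nat) := if n <=? d then n else pred n.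
Lemma up_merge : forall d n, up (merge d) n = merge (S d) n.
Proof.
  intros d [|n]; unfold merge; simpl; auto.
  destruct (n <=? d) eqn:E; auto. apply Nat.leb_gt in E. destruct n; simpl; lia.
Qed.

Lemma split_iff : forall d t t', Defs.split d t t' <-> ren (merge d) t' = t.
Proof.
  split.
  - induction 1; simpl; unfold merge; try (f_equal; auto).
    + f_equal. destruct (Nat.leb_spec n d); lia.
    + f_equal. destruct (Nat.leb_spec (S n) d); lia.
    + rewrite Nat.leb_refl; auto.
    + destruct (Nat.leb_spec (S d) d); lia.
    + rewrite <- IHsplit. apply ren_ext. apply up_merge.
    + rewrite <- IHsplit1. apply ren_ext. apply up_merge.
  - revert d t. induction t'; intros d t H; simpl in H; subst.
    + unfold merge. destruct (lt_eq_lt_dec n d) as [[H|H]|H].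
      * rewrite (proj2 (Nat.leb_le n d)) by lia. apply split_lt; auto.
      * subst. rewrite Nat.leb_refl. apply split_keep.
      * rewrite (proj2 (Nat.leb_gt n d)) by lia.
        destruct (Nat.eq_dec n (S d)). subst. simpl. apply split_move.
        destruct n. lia. simpl. apply split_gt. lia.
    + constructor. apply IHt'. apply ren_ext. intros; symmetry; apply up_merge.
    + constructor; auto.
    + constructor; auto. apply IHt'1. apply ren_ext. intros; symmetry; apply up_merge.
Qed.

Lemma upn_spec : forall k f n, upn k f n = if n <? k then n else k + f (n - k).
Proof.
  induction k; intros f n; simpl. rewrite Nat.sub_0_r; reflexivity.
  destruct n; simpl; auto. rewrite IHk. unfold Nat.ltb. simpl.
  destruct k; simpl; auto. destruct (n <=? k); auto.
Qed.

Lemma upn_up : forall n f, upn n (up f) = upn (S n) f.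
Proof. induction n; intros; simpl; auto. rewrite IHn. reflexivity. Qed.

Lemma occ_ren_ge : forall t f n, occ n t <= occ (f n) (ren f t).
Proof.
  induction t; intros f m; simpl.
  - destruct (Nat.eqb_spec n m); subst; [rewrite Nat.eqb_refl|]; lia.
  - apply (IHt (up f) (S m)).
  - specialize (IHt1 f m); specialize (IHt2 f m); lia.
  - specialize (IHt1 (up f) (S m)); specialize (IHt2 f m); simpl in *; lia.
Qed.

Lemma occ_ren_inj : forall t f n, (forall m, f m = f n -> m = n) -> occ (f n) (ren f t) = occ n t.
Proof.
  induction t; intros f m Hf; simpl.
  - destruct (Nat.eqb_spec (f n) (f m)), (Nat.eqb_spec n m); subst; auto.
    apply Hf in e; contradiction. exfalso; auto.
  - apply (IHt (up f) (S m)). intros [|k] H; simpl in H; try discriminate.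
    injection H; intros; f_equal; auto.
  - rewrite IHt1, IHt2; auto.
  - change (S (f m)) with (up f (S m)). rewrite IHt1, IHt2; auto.
    intros [|k] H; simpl in H; try discriminate. injection H; intros; f_equal; auto.
Qed.

Lemma occ_ren_inj' : forall t f n k, (forall m m', f m = f m' -> m = m') -> f n = k ->
  occ k (ren f t) = occ n t.
Proof. intros; subst; apply occ_ren_inj; auto. Qed.

Lemma occ_ren_out : forall t f k, (forall m, f m <> k) -> occ k (ren f t) = 0.
Proof.
  induction t; intros f k Hf; simpl.
  - destruct (Nat.eqb_spec (f n) k); auto. exfalso; eapply Hf; eauto.
  - apply IHt. intros [|m]; simpl; auto.
  - rewrite IHt1, IHt2; auto.
  - rewrite IHt1, IHt2; auto. intros [|m]; simpl; auto.
Qed.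


Ltac dec := repeat match goal with
  | |- context [?a <? ?b] => destruct (Nat.ltb_spec a b)
  | |- context [?a =? ?b] => destruct (Nat.eqb_spec a b)
  | |- context [?a <=? ?b] => destruct (Nat.leb_spec a b)
  | H : context [?a <? ?b] |- _ => destruct (Nat.ltb_spec a b)
  | H : context [?a =? ?b] |- _ => destruct (Nat.eqb_spec a b)
  | H : context [?a <=? ?b] |- _ => destruct (Nat.leb_spec a b)
  end.

Lemma ren_lift0 : forall u f, ren (up f) (lift 0 u) = lift 0 (ren f u).
Proof. intros. rewrite !lift0_ren, !ren_comp. apply ren_ext; reflexivity. Qed.

Lemma subst_ren_cond : forall f g k k',
  (forall n, n <> k -> g n <> k' /\
     (if g n <? k' then g n else pred (g n)) = f (if n <? k then n else pred n)) ->
  (forall n, n <> S k -> up g n <> S k' /\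
     (if up g n <? S k' then up g n else pred (up g n)) = up f (if n <? S k then n else pred n)).
Proof.
  intros f g k k' Hn [|n] H; simpl.
  - split; auto.
  - assert (n <> k) by congruence. destruct (Hn n H0) as [H1 H2]. split. congruence.
    revert H2. dec; simpl; intro HH; try lia.
    all: try (rewrite HH; reflexivity).
    all: destruct n; simpl in *; try lia; rewrite <- HH; destruct (g (S n)); simpl; lia.
Qed.

Lemma subst_ren : forall t f g k k' u, g k = k' ->
  (forall n, n <> k -> g n <> k' /\
     (if g n <? k' then g n else pred (g n)) = f (if n <? k then n else pred n)) ->
  ren f (subst k u t) = subst k' (ren f u) (ren g t).
Proof.
  induction t; intros f g k k' u Hk Hn; simpl.
  - destruct (Nat.eqb_spec n k) as [->|Hnk].
    + rewrite Hk. simpl. dec; try lia. reflexivity.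
    + destruct (Hn n Hnk) as [H1 H2]. revert H2.
      simpl. dec; simpl; intro HH; try lia; congruence.
  - f_equal. rewrite IHt with (g := up g) (k' := S k'); [rewrite ren_lift0; reflexivity| simpl; congruence|].
    apply subst_ren_cond; auto.
  - rewrite (IHt1 f g k k'), (IHt2 f g k k'); auto.
  - f_equal.
    + rewrite IHt1 with (g := up g) (k' := S k'); [rewrite ren_lift0; reflexivity| simpl; congruence|].
      apply subst_ren_cond; auto.
    + apply IHt2; auto.
Qed.


Lemma subst_cancel : forall t f h k u, (forall n, f n <> k) ->
  (forall n, h n = if f n <? k then f n else pred (f n)) ->
  subst k u (ren f t) = ren h t.
Proof.
  induction t; intros f h k u Hf Hh; simpl.
  - rewrite Hh. specialize (Hf n). dec; try lia; reflexivity.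
  - f_equal. apply IHt. intros [|n]; simpl; auto.
    intros [|n]; simpl; auto. rewrite Hh. specialize (Hf n). dec; try lia; auto.
    all: destruct (f n); simpl; lia.
  - f_equal; auto.
  - f_equal; auto. apply IHt1. intros [|n]; simpl; auto.
    intros [|n]; simpl; auto. rewrite Hh. specialize (Hf n). dec; try lia; auto.
    all: destruct (f n); simpl; lia.
Qed.

Lemma subst_lift0 : forall s u, subst 0 u (lift 0 s) = s.
Proof.
  intros. rewrite lift0_ren. rewrite (subst_cancel s S (fun n => n)); auto.
  apply ren_id.
Qed.

Lemma subst_swap : forall t k u, subst k u (swap k t) = subst (S k) u t.
Proof.
  induction t; intros k u; simpl.
  - cbn -[Nat.eqb Nat.ltb Nat.leb]; dec; cbn -[Nat.eqb Nat.ltb Nat.leb]; dec; try lia; try reflexivity; f_equal; lia.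
  - rewrite IHt; auto.
  - rewrite IHt1, IHt2; auto.
  - rewrite IHt1, IHt2; auto.
Qed.

Lemma swap_inv : forall t d, swap d (swap d t) = t.
Proof.
  induction t; intros d; simpl.
  - cbn -[Nat.eqb Nat.ltb Nat.leb]; dec; cbn -[Nat.eqb Nat.ltb Nat.leb]; dec; try lia; try reflexivity; f_equal; lia.
  - rewrite IHt; auto.
  - rewrite IHt1, IHt2; auto.
  - rewrite IHt1, IHt2; auto.
Qed.

Lemma liftn_S : forall n v, liftn n (lift 0 v) = liftn (S n) v.
Proof. induction n; intros; simpl; auto. rewrite IHn. reflexivity. Qed.

Lemma subst_lift0_comm : forall s k w, subst (S k) (lift 0 w) (lift 0 s) = lift 0 (subst k w s).
Proof.
  intros. rewrite (lift0_ren (subst k w s)).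
  rewrite (subst_ren s S S k (S k) w); auto. rewrite <- !lift0_ren. reflexivity.
  intros n Hn. split. lia. dec; simpl; try lia; auto.
Qed.

Lemma subst_swap0_comm : forall t k W, swap 0 W = W ->
  subst (S (S k)) W (swap 0 t) = swap 0 (subst (S (S k)) W t).
Proof.
  intros. rewrite !swap_ren. rewrite (subst_ren t (swapv 0) (swapv 0) (S (S k)) (S (S k)) W).
  rewrite <- (swap_ren W), H. reflexivity.
  reflexivity.
  intros n Hn. unfold swapv. split; dec; simpl; try lia; dec; try lia; auto.
Qed.


Fixpoint renL (f : nat -> nat) (L : list term) : list term :=
  match L with [] => [] | x :: L => ren (upn (length L) f) x :: renL f L end.

Lemma length_renL : forall L f, length (renL f L) = length L.
Proof. induction L; simpl; auto. Qed.

Lemma jumps_cons : forall t x L, jumps t (x :: L) = jumps (Sub t x) L.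
Proof. reflexivity. Qed.

Lemma jumps_app1 : forall t L x, jumps t (L ++ [x]) = Sub (jumps t L) x.
Proof. intros. unfold jumps. rewrite fold_left_app. reflexivity. Qed.

Lemma ren_jumps : forall L t f, ren f (jumps t L) = jumps (ren (upn (length L) f) t) (renL f L).
Proof.
  induction L; intros t f; simpl; auto.
Qed.

Lemma ren_liftn : forall n f u, ren (upn n f) (liftn n u) = liftn n (ren f u).
Proof.
  intros. rewrite !liftn_ren, !ren_comp. apply ren_ext. intros m.
  rewrite upn_spec. dec; try lia. f_equal. f_equal. lia.
Qed.


Lemma occ_ren_fix : forall t f k, (forall m, f m = k <-> m = k) -> occ k (ren f t) = occ k t.
Proof.
  induction t; intros f k Hf; simpl.
  - dec; auto.
    + apply (proj1 (Hf n)) in e; contradiction.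
    + exfalso; apply n0, (proj2 (Hf n)); auto.
  - apply IHt. intros [|m]; simpl; split; intro H; try discriminate; auto.
    injection H; intro; f_equal; apply Hf; auto.
    injection H; intro; f_equal; apply Hf; auto.
  - rewrite IHt1, IHt2; auto.
  - rewrite IHt1, IHt2; auto. intros [|m]; simpl; split; intro H; try discriminate; auto.
    injection H; intro; f_equal; apply Hf; auto.
    injection H; intro; f_equal; apply Hf; auto.
Qed.

Lemma occ0_up : forall t f, occ 0 (ren (up f) t) = occ 0 t.
Proof. intros; apply occ_ren_fix. intros [|m]; simpl; split; intro; congruence. Qed.

Lemma occ1_upup : forall t f, occ 1 (ren (up (up f)) t) = occ 1 t.
Proof. intros; apply occ_ren_fix. intros [|[|m]]; simpl; split; intro; congruence. Qed.

Lemma ren_subst0 : forall t f u, ren f (subst 0 u t) = subst 0 (ren f u) (ren (up f) t).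
Proof.
  intros. apply subst_ren; auto. intros [|n] H; simpl; [lia|]. split; auto.
Qed.

Lemma lj_root_ren : forall t t' f, lj_root t t' -> lj_root (ren f t) (ren f t').
Proof.
  intros t t' f H. destruct H.
  - simpl. rewrite !ren_jumps. simpl. rewrite <- (length_renL L f).
    replace (ren (upn (length (renL f L)) f) (liftn (length (renL f L)) u))
      with (liftn (length (renL f L)) (ren f u)).
    apply r_dB. rewrite ren_liftn. reflexivity.
  - rewrite ren_subst0. simpl. apply r_w. rewrite occ0_up; auto.
  - rewrite ren_subst0. simpl. apply r_d. rewrite occ0_up; auto.
  - simpl. rewrite ren_lift0. apply r_c with (t' := ren (up (up f)) t').
    + rewrite occ0_up; auto.
    + apply split_iff. apply split_iff in H0. subst t. rewrite !ren_comp.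
      apply ren_ext. intros [|[|n]]; reflexivity.
    + rewrite occ1_upup; auto.
    + rewrite occ1_upup, occ0_up; auto.
Qed.

Lemma lj_step_ren : forall t t' f, lj_step t t' -> lj_step (ren f t) (ren f t').
Proof.
  intros t t' f H. revert f. induction H; intros f; simpl.
  - apply s_root, lj_root_ren; auto.
  - apply s_lam; auto.
  - apply s_appl; auto.
  - apply s_appr; auto.
  - apply s_subl; auto.
  - apply s_subr; auto.
Qed.


Lemma ren_inv_Lam : forall t f a, ren f t = Lam a -> exists t1, t = Lam t1 /\ a = ren (up f) t1.
Proof. intros [] f a H; simpl in H; try discriminate. injection H; intros; subst; eauto. Qed.
Lemma ren_inv_App : forall t f a b, ren f t = App a b ->
  exists a0 b0, t = App a0 b0 /\ a = ren f a0 /\ b = ren f b0.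
Proof. intros [] f a b H; simpl in H; try discriminate. injection H; intros; subst; eauto. Qed.
Lemma ren_inv_Sub : forall t f a b, ren f t = Sub a b ->
  exists a0 b0, t = Sub a0 b0 /\ a = ren (up f) a0 /\ b = ren f b0.
Proof. intros [] f a b H; simpl in H; try discriminate. injection H; intros; subst; eauto. Qed.

Lemma ren_inv_jumps : forall L t f c, ren f t = jumps c L ->
  exists c0 L0, t = jumps c0 L0 /\ c = ren (upn (length L) f) c0 /\ L = renL f L0.
Proof.
  induction L; intros t f c H.
  - exists t, []. simpl in *. auto.
  - rewrite jumps_cons in H. destruct (IHL t f _ H) as [c1 [L0 [H1 [H2 H3]]]].
    symmetry in H2. destruct (ren_inv_Sub _ _ _ _ H2) as [c0 [x0 [-> [-> ->]]]].
    exists c0, (x0 :: L0). subst t L. simpl. rewrite !length_renL. split; auto.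
Qed.

Lemma ren_inv_jumps_lam : forall L t f a, ren f t = jumps (Lam a) L ->
  exists a0 L0, t = jumps (Lam a0) L0 /\ a = ren (upn (S (length L0)) f) a0 /\ L = renL f L0.
Proof.
  intros. destruct (ren_inv_jumps L t f _ H) as [c0 [L0 [H1 [H2 H3]]]].
  symmetry in H2. destruct (ren_inv_Lam _ _ _ H2) as [a0 [-> ->]].
  exists a0, L0. subst. rewrite length_renL. auto.
Qed.

Lemma pullback : forall a0 d f a', ren (upn (S d) f) a0 = ren (merge d) a' ->
  exists a0', ren (merge d) a0' = a0 /\ ren (upn (S (S d)) f) a0' = a'.
Proof.
  induction a0; intros d f a' H.
  - destruct a'; simpl in H; try discriminate. injection H; clear H; intro H.
    change (up (upn d f) n) with (upn (S d) f n) in H.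
    rewrite upn_spec in H. unfold merge in H.
    destruct (Nat.ltb_spec n (S d)).
    + destruct (Nat.eqb_spec n d).
      * exists (Var n0). cbn [ren]. rewrite upn_spec. unfold merge.
        revert H. dec; intros; try lia; split; f_equal; lia.
      * exists (Var n). cbn [ren]. rewrite upn_spec. unfold merge.
        revert H. dec; intros; try lia; split; f_equal; lia.
    + exists (Var (S n)). cbn [ren]. rewrite upn_spec. unfold merge.
      revert H. dec; intros; try lia; split; f_equal; try lia.
      replace (S n - S (S d)) with (n - S d) by lia. lia.
  - destruct a'; simpl in H; try discriminate. injection H; clear H; intro H.
    rewrite (ren_ext a' (up (merge d)) (merge (S d))) in H by apply up_merge.
    destruct (IHa0 (S d) f a' H) as [x [H1 H2]]. exists (Lam x). simpl.
    rewrite (ren_ext x (up (merge d)) (merge (S d))) by apply up_merge.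
    change (up (up (up (upn d f)))) with (upn (S (S (S d))) f).
    rewrite H1, H2. auto.
  - destruct a'; simpl in H; try discriminate. injection H; clear H; intros H1 H2.
    destruct (IHa0_1 d f _ H2) as [x [Hx1 Hx2]]. destruct (IHa0_2 d f _ H1) as [y [Hy1 Hy2]].
    exists (App x y). cbn [ren]. rewrite Hx1, Hx2, Hy1, Hy2. auto.
  - destruct a'; simpl in H; try discriminate. injection H; clear H; intros H1 H2.
    rewrite (ren_ext a'1 (up (merge d)) (merge (S d))) in H2 by apply up_merge.
    destruct (IHa0_1 (S d) f _ H2) as [x [Hx1 Hx2]]. destruct (IHa0_2 d f _ H1) as [y [Hy1 Hy2]].
    exists (Sub x y). simpl.
    rewrite (ren_ext x (up (merge d)) (merge (S d))) by apply up_merge.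
    change (up (up (up (upn d f)))) with (upn (S (S (S d))) f).
    change (up (up (upn d f))) with (upn (S (S d)) f).
    rewrite Hx1, Hx2, Hy1, Hy2. auto.
Qed.

Lemma lj_root_ren_inv : forall t f w, lj_root (ren f t) w -> exists w0, lj_root t w0 /\ w = ren f w0.
Proof.
  intros t f w H. remember (ren f t) as rt. destruct H.
  - symmetry in Heqrt. destruct (ren_inv_App _ _ _ _ Heqrt) as [p [u0 [-> [Hp ->]]]].
    symmetry in Hp. destruct (ren_inv_jumps_lam _ _ _ _ Hp) as [a0 [L0 [-> [-> ->]]]].
    exists (jumps (Sub a0 (liftn (length L0) u0)) L0). split. apply r_dB.
    rewrite ren_jumps. simpl. rewrite length_renL, ren_liftn. reflexivity.
  - symmetry in Heqrt. destruct (ren_inv_Sub _ _ _ _ Heqrt) as [a0 [u0 [-> [-> ->]]]].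
    exists (subst 0 u0 a0). split. apply r_w. rewrite occ0_up in H; auto.
    rewrite ren_subst0. auto.
  - symmetry in Heqrt. destruct (ren_inv_Sub _ _ _ _ Heqrt) as [a0 [u0 [-> [-> ->]]]].
    exists (subst 0 u0 a0). split. apply r_d. rewrite occ0_up in H; auto.
    rewrite ren_subst0. auto.
  - symmetry in Heqrt. destruct (ren_inv_Sub _ _ _ _ Heqrt) as [a0 [u0 [-> [-> ->]]]].
    apply split_iff in H0. symmetry in H0.
    destruct (pullback a0 0 f t' H0) as [x [Hx1 Hx2]].
    exists (Sub (Sub x (lift 0 u0)) u0). split.
    + rewrite occ0_up in H. apply r_c; auto.
      apply split_iff; auto.
      simpl in Hx2. rewrite <- Hx2, occ1_upup in H1; auto.
      simpl in Hx2. rewrite <- Hx2, occ1_upup, occ0_up in H2; auto.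
    + simpl. rewrite ren_lift0. simpl in Hx2. rewrite Hx2. auto.
Qed.

Lemma lj_step_ren_inv : forall t f w, lj_step (ren f t) w -> exists w0, lj_step t w0 /\ w = ren f w0.
Proof.
  intros t f w H. remember (ren f t) as rt. revert t f Heqrt. induction H; intros t0 f Heq; symmetry in Heq.
  - subst. destruct (lj_root_ren_inv _ _ _ H) as [w0 [H1 H2]]. exists w0; split; auto. apply s_root; auto.
  - destruct (ren_inv_Lam _ _ _ Heq) as [t1 [-> ->]].
    destruct (IHlj_step t1 (up f) eq_refl) as [w0 [H1 ->]]. exists (Lam w0); split; auto. apply s_lam; auto.
  - destruct (ren_inv_App _ _ _ _ Heq) as [a [b [-> [-> ->]]]].
    destruct (IHlj_step a f eq_refl) as [w0 [H1 ->]]. exists (App w0 b); split; auto. apply s_appl; auto.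
  - destruct (ren_inv_App _ _ _ _ Heq) as [a [b [-> [-> ->]]]].
    destruct (IHlj_step b f eq_refl) as [w0 [H1 ->]]. exists (App a w0); split; auto. apply s_appr; auto.
  - destruct (ren_inv_Sub _ _ _ _ Heq) as [a [b [-> [-> ->]]]].
    destruct (IHlj_step a (up f) eq_refl) as [w0 [H1 ->]]. exists (Sub w0 b); split; auto. apply s_subl; auto.
  - destruct (ren_inv_Sub _ _ _ _ Heq) as [a [b [-> [-> ->]]]].
    destruct (IHlj_step b f eq_refl) as [w0 [H1 ->]]. exists (Sub a w0); split; auto. apply s_subr; auto.
Qed.

Lemma lift0_step_inv : forall s w, lj_step (lift 0 s) w -> exists s', lj_step s s' /\ w = lift 0 s'.
Proof.
  intros s w H. rewrite lift0_ren in H. destruct (lj_step_ren_inv _ _ _ H) as [w0 [H1 ->]].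
  exists w0; split; auto. rewrite lift0_ren; auto.
Qed.


Definition symR (R : term -> term -> Prop) a b := R a b \/ R b a.

Inductive cstep (R : term -> term -> Prop) : term -> term -> Prop :=
| c_root : forall a b, R a b -> cstep R a b
| c_lam : forall a b, cstep R a b -> cstep R (Lam a) (Lam b)
| c_appl : forall a b c, cstep R a b -> cstep R (App a c) (App b c)
| c_appr : forall a b c, cstep R a b -> cstep R (App c a) (App c b)
| c_subl : forall a b c, cstep R a b -> cstep R (Sub a c) (Sub b c)
| c_subr : forall a b c, cstep R a b -> cstep R (Sub c a) (Sub c b).

Definition half (R : term -> term -> Prop) a b :=
  forall a', lj_step a a' -> exists b', lj_step b b' /\ ctx_equiv R a' b'.

Record good (R : term -> term -> Prop) : Prop := {
  g_ren : forall a b f, R a b -> R (ren f a) (ren f b);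
  g_subst : forall a b k w, R a b -> R (subst k w a) (subst k w b);
  g_occ : forall a b n, R a b -> occ n a = occ n b;
  g_inv1 : forall t f q, R (ren f t) q -> exists q0, R t q0 /\ q = ren f q0;
  g_inv2 : forall t f p, R p (ren f t) -> exists p0, R p0 t /\ p = ren f p0;
  g_root : forall a b, R a b -> half R a b /\ half R b a;
  g_dB : forall a L u, symR R (jumps (Lam a) L) u -> exists a' L', u = jumps (Lam a') L' /\
     forall v, ctx_equiv R (jumps (Sub a (liftn (length L) v)) L) (jumps (Sub a' (liftn (length L') v)) L')
}.

Lemma jumps_Lam_inv : forall L a b, jumps (Lam a) L = Lam b -> L = [] /\ a = b.
Proof.
  intros L; induction L using rev_ind; intros a b H. simpl in H. injection H; auto.
  rewrite jumps_app1 in H; discriminate.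
Qed.
Lemma jumps_Sub_inv : forall L a p q, jumps (Lam a) L = Sub p q ->
  exists L0, L = L0 ++ [q] /\ p = jumps (Lam a) L0.
Proof.
  intros L; induction L using rev_ind; intros a p q H. simpl in H; discriminate.
  rewrite jumps_app1 in H. injection H; intros; subst; eauto.
Qed.
Lemma jumps_App_inv : forall L a p q, jumps (Lam a) L <> App p q.
Proof.
  intros L; induction L using rev_ind; intros a p q H. simpl in H; discriminate.
  rewrite jumps_app1 in H. discriminate.
Qed.

Lemma cstep_sym : forall R a b, cstep (symR R) a b -> cstep (symR R) b a.
Proof.
  induction 1.
  - apply c_root. destruct H; [right|left]; auto.
  - apply c_lam; auto.
  - apply c_appl; auto.
  - apply c_appr; auto.
  - apply c_subl; auto.
  - apply c_subr; auto.
Qed.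

Lemma cstep_ctx : forall R a b, cstep (symR R) a b -> ctx_equiv R a b.
Proof.
  induction 1.
  - destruct H; [apply e_base|apply e_sym, e_base]; auto.
  - apply e_lam; auto.
  - apply e_appl; auto.
  - apply e_appr; auto.
  - apply e_subl; auto.
  - apply e_subr; auto.
Qed.

Lemma cstep_ren : forall R, good R -> forall a b, cstep (symR R) a b -> forall f, cstep (symR R) (ren f a) (ren f b).
Proof.
  intros R G a b H. induction H; intros f; simpl.
  - apply c_root. destruct H; [left|right]; apply G; auto.
  - apply c_lam; auto.
  - apply c_appl; auto.
  - apply c_appr; auto.
  - apply c_subl; auto.
  - apply c_subr; auto.
Qed.

Lemma cstep_subst : forall R, good R -> forall a b, cstep (symR R) a b -> forall k w, cstep (symR R) (subst k w a) (subst k w b).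
Proof.
  intros R G a b H. induction H; intros k w; simpl.
  - apply c_root. destruct H; [left|right]; apply G; auto.
  - apply c_lam; auto.
  - apply c_appl; auto.
  - apply c_appr; auto.
  - apply c_subl; auto.
  - apply c_subr; auto.
Qed.

Lemma cstep_occ : forall R, good R -> forall a b, cstep (symR R) a b -> forall n, occ n a = occ n b.
Proof.
  intros R G a b H. induction H; intros n; simpl; auto.
  destruct H; [|symmetry]; eapply g_occ; eauto.
Qed.

Lemma cstep_ren_inv : forall R, good R -> forall t f u, cstep (symR R) (ren f t) u ->
  exists u0, cstep (symR R) t u0 /\ u = ren f u0.
Proof.
  intros R G t f u H. remember (ren f t) as rt. revert t f Heqrt.
  induction H; intros t0 f Heq; symmetry in Heq.
  - subst. destruct H.
    + destruct (g_inv1 R G _ _ _ H) as [q [H1 H2]]. exists q; split; auto. apply c_root; left; auto.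
    + destruct (g_inv2 R G _ _ _ H) as [q [H1 H2]]. exists q; split; auto. apply c_root; right; auto.
  - destruct (ren_inv_Lam _ _ _ Heq) as [t1 [-> ->]].
    destruct (IHcstep t1 (up f) eq_refl) as [w0 [H1 ->]]. exists (Lam w0); split; auto. apply c_lam; auto.
  - destruct (ren_inv_App _ _ _ _ Heq) as [x [y [-> [-> ->]]]].
    destruct (IHcstep x f eq_refl) as [w0 [H1 ->]]. exists (App w0 y); split; auto. apply c_appl; auto.
  - destruct (ren_inv_App _ _ _ _ Heq) as [x [y [-> [-> ->]]]].
    destruct (IHcstep y f eq_refl) as [w0 [H1 ->]]. exists (App x w0); split; auto. apply c_appr; auto.
  - destruct (ren_inv_Sub _ _ _ _ Heq) as [x [y [-> [-> ->]]]].
    destruct (IHcstep x (up f) eq_refl) as [w0 [H1 ->]]. exists (Sub w0 y); split; auto. apply c_subl; auto.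
  - destruct (ren_inv_Sub _ _ _ _ Heq) as [x [y [-> [-> ->]]]].
    destruct (IHcstep y f eq_refl) as [w0 [H1 ->]]. exists (Sub x w0); split; auto. apply c_subr; auto.
Qed.

Lemma ctx_ren : forall R, good R -> forall a b, ctx_equiv R a b -> forall f, ctx_equiv R (ren f a) (ren f b).
Proof.
  intros R G a b H. induction H; intros f; simpl.
  - apply e_base. apply G; auto.
  - apply e_refl.
  - apply e_sym; auto.
  - eapply e_trans; eauto.
  - apply e_lam; auto.
  - apply e_appl; auto.
  - apply e_appr; auto.
  - apply e_subl; auto.
  - apply e_subr; auto.
Qed.

Lemma ctx_lift0 : forall R, good R -> forall a b, ctx_equiv R a b -> ctx_equiv R (lift 0 a) (lift 0 b).
Proof. intros. rewrite !lift0_ren. apply ctx_ren; auto. Qed.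

Lemma ctx_subst_arg : forall R, good R -> forall v a b k, ctx_equiv R a b ->
  ctx_equiv R (subst k a v) (subst k b v).
Proof.
  intros R G v. induction v; intros a b k H; simpl.
  - dec; auto; apply e_refl.
  - apply e_lam. apply IHv. apply ctx_lift0; auto.
  - eapply e_trans. apply e_appl, IHv1; eauto. apply e_appr, IHv2; auto.
  - eapply e_trans. apply e_subl, IHv1, ctx_lift0; eauto. apply e_subr, IHv2; auto.
Qed.

Lemma ctx_jumps : forall R L a b, ctx_equiv R a b -> ctx_equiv R (jumps a L) (jumps b L).
Proof.
  induction L; intros a0 b H; simpl; auto. apply IHL. apply e_subl; auto.
Qed.

Lemma dB_cstep : forall R, good R -> forall L a u, cstep (symR R) (jumps (Lam a) L) u ->
  exists a' L', u = jumps (Lam a') L' /\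
     forall v, ctx_equiv R (jumps (Sub a (liftn (length L) v)) L) (jumps (Sub a' (liftn (length L') v)) L').
Proof.
  intros R G L. induction L using rev_ind; intros a u H.
  - simpl in H. inversion H; subst.
    + apply (g_dB R G a [] u); auto.
    + exists b, []. split; auto. intros v. simpl. apply e_subl, cstep_ctx; auto.
  - rewrite jumps_app1 in H. inversion H; subst.
    + rewrite <- jumps_app1 in H0. apply (g_dB R G); auto.
    + destruct (IHL a b H3) as [a' [L' [-> Hc]]].
      exists a', (L' ++ [x]). split. rewrite jumps_app1; auto.
      intros v. rewrite !jumps_app1, !length_app. simpl. rewrite !Nat.add_1_r, <- !liftn_S.
      apply e_subl, Hc.
    + exists a, (L ++ [b]). split. rewrite jumps_app1; auto.
      intros v. rewrite !jumps_app1, !length_app. simpl. apply e_subr, cstep_ctx; auto.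
Qed.


Lemma cstep_half : forall R, good R -> forall t u, cstep (symR R) t u -> half R t u.
Proof.
  intros R G t u H.
  induction H as [a b Hr|a b Hc IH|a b c Hc IH|a b c Hc IH|a b c Hc IH|a b c Hc IH];
    intros w Hs.
  - destruct Hr as [Hr|Hr]; [apply (proj1 (g_root R G _ _ Hr))|apply (proj2 (g_root R G _ _ Hr))]; auto.
  - inversion Hs; subst. inversion H.
    edestruct IH as [b' [H1 HH2]]; [eassumption|]. exists (Lam b'). split. apply s_lam; auto. apply e_lam; auto.
  - inversion Hs; subst.
    + inversion H; subst.
      edestruct (dB_cstep R G) as [a' [L' [Heq Hj]]]; [eassumption|]. subst b.
      eexists; split. apply s_root, r_dB. apply Hj.
    + edestruct IH as [b' [H1 HH2]]; [eassumption|]. exists (App b' c). split. apply s_appl; auto. apply e_appl; auto.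
    + exists (App b u'). split. apply s_appr; auto. apply e_appl, cstep_ctx; auto.
  - inversion Hs; subst.
    + inversion H; subst.
      eexists; split. apply s_root, r_dB.
      apply ctx_jumps, e_subr, cstep_ctx. rewrite !liftn_ren. apply cstep_ren; auto.
    + exists (App t' b). split. apply s_appl; auto. apply e_appr, cstep_ctx; auto.
    + edestruct IH as [b' [H1 HH2]]; [eassumption|]. exists (App c b'). split. apply s_appr; auto. apply e_appr; auto.
  - inversion Hs; subst.
    + inversion H; subst.
      * exists (subst 0 c b). split. apply s_root, r_w. rewrite <- (cstep_occ R G _ _ Hc); auto.
        apply cstep_ctx, cstep_subst; auto.
      * exists (subst 0 c b). split. apply s_root, r_d. rewrite <- (cstep_occ R G _ _ Hc); auto.
        apply cstep_ctx, cstep_subst; auto.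
      * apply split_iff in H3. subst a.
        destruct (cstep_ren_inv R G _ _ _ Hc) as [u0 [Hu ->]].
        exists (Sub (Sub u0 (lift 0 c)) c). split.
        -- apply s_root, r_c.
           ++ rewrite <- (cstep_occ R G _ _ Hc); auto.
           ++ apply split_iff; auto.
           ++ rewrite <- (cstep_occ R G _ _ Hu); auto.
           ++ rewrite <- (cstep_occ R G _ _ Hu), <- (cstep_occ R G _ _ Hc); auto.
        -- apply e_subl, e_subl, cstep_ctx; auto.
    + edestruct IH as [b' [H1 HH2]]; [eassumption|]. exists (Sub b' c). split. apply s_subl; auto. apply e_subl; auto.
    + exists (Sub b u'). split. apply s_subr; auto. apply e_subl, cstep_ctx; auto.
  - inversion Hs; subst.
    + inversion H; subst.
      * exists (subst 0 b c). split. apply s_root, r_w; auto. apply ctx_subst_arg, cstep_ctx; auto.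
      * exists (subst 0 b c). split. apply s_root, r_d; auto. apply ctx_subst_arg, cstep_ctx; auto.
      * exists (Sub (Sub t' (lift 0 b)) b). split. apply s_root, r_c; auto.
        eapply e_trans. apply e_subl, e_subr, ctx_lift0, cstep_ctx; eauto.
        apply e_subr, cstep_ctx; auto.
    + exists (Sub t' b). split. apply s_subl; auto. apply e_subr, cstep_ctx; auto.
    + edestruct IH as [b' [H1 HH2]]; [eassumption|]. exists (Sub c b'). split. apply s_subr; auto. apply e_subr; auto.
Qed.

Inductive rst (S : term -> term -> Prop) : term -> term -> Prop :=
| rst_step : forall a b, S a b -> rst S a b
| rst_refl : forall a, rst S a a
| rst_sym : forall a b, rst S a b -> rst S b a
| rst_trans : forall a b c, rst S a b -> rst S b c -> rst S a c.

Lemma rst_cong : forall S (F : term -> term), (forall x y, S x y -> S (F x) (F y)) ->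
  forall a b, rst S a b -> rst S (F a) (F b).
Proof.
  intros S F HF a b H. induction H.
  - apply rst_step; auto.
  - apply rst_refl.
  - apply rst_sym; auto.
  - eapply rst_trans; eauto.
Qed.

Lemma ctx_to_rst : forall R a b, ctx_equiv R a b -> rst (cstep (symR R)) a b.
Proof.
  intros R a b H. induction H.
  - apply rst_step, c_root; left; auto.
  - apply rst_refl.
  - apply rst_sym; auto.
  - eapply rst_trans; eauto.
  - apply (rst_cong _ Lam); auto. intros; apply c_lam; auto.
  - apply (rst_cong _ (fun x => App x u)); auto. intros; apply c_appl; auto.
  - apply (rst_cong _ (fun x => App t x)); auto. intros; apply c_appr; auto.
  - apply (rst_cong _ (fun x => Sub x u)); auto. intros; apply c_subl; auto.
  - apply (rst_cong _ (fun x => Sub t x)); auto. intros; apply c_subr; auto.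
Qed.

Lemma good_bisim : forall R, good R -> strong_bisimulation lj_step (ctx_equiv R).
Proof.
  intros R G s t H. apply ctx_to_rst in H.
  cut (half R s t /\ half R t s). { intros [H1 H2]. split; auto.
    intros t' Ht. destruct (H2 t' Ht) as [s' [Hs Hr]]. exists s'. split; auto. apply e_sym; auto. }
  induction H.
  - split; apply cstep_half; auto. apply cstep_sym; auto.
  - split; intros a' Ha; exists a'; split; auto; apply e_refl.
  - tauto.
  - destruct IHrst1 as [H1 H2], IHrst2 as [H3 H4]. split.
    + intros x Hx. destruct (H1 x Hx) as [y [Hy Rxy]]. destruct (H3 y Hy) as [z [Hz Ryz]].
      exists z; split; auto. eapply e_trans; eauto.
    + intros x Hx. destruct (H4 x Hx) as [y [Hy Rxy]]. destruct (H2 y Hy) as [z [Hz Ryz]].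
      exists z; split; auto. eapply e_trans; eauto.
Qed.


Lemma lift_inv : forall b0 f s, ren (up f) b0 = lift 0 s -> exists s0, b0 = lift 0 s0 /\ s = ren f s0.
Proof.
  intros b0 f s H.
  assert (H0 : occ 0 b0 = 0).
  { pose proof (occ_ren_ge b0 (up f) 0). simpl in H0. rewrite H, lift0_ren in H0.
    rewrite occ_ren_out in H0; [lia|]. intros; discriminate. }
  exists (ren pred b0). split.
  - rewrite lift0_ren, ren_comp. rewrite <- (ren_id b0) at 1. apply ren_ext_occ.
    intros [|n] Hn; simpl; lia.
  - assert (s = ren pred (lift 0 s)). { rewrite lift0_ren, ren_comp. rewrite ren_id. reflexivity. }
    rewrite H1, <- H, !ren_comp. apply ren_ext_occ. intros [|n] Hn; simpl; lia.
Qed.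

Lemma S_eq : forall S' s, ren (merge 0) S' = lift 0 s -> S' = lift 0 (lift 0 s).
Proof.
  intros S' s H.
  assert (H0 : occ 0 S' = 0).
  { pose proof (occ_ren_ge S' (merge 0) 0). simpl in H0. rewrite H, lift0_ren in H0.
    rewrite occ_ren_out in H0; [lia|]. intros; discriminate. }
  assert (H1 : occ 1 S' = 0).
  { pose proof (occ_ren_ge S' (merge 0) 1). simpl in H1. rewrite H, lift0_ren in H1.
    rewrite occ_ren_out in H1; [lia|]. intros; discriminate. }
  rewrite <- H. rewrite !lift0_ren, ren_comp. rewrite <- (ren_id S') at 1. apply ren_ext_occ.
  intros [|[|n]] Hn; unfold merge; simpl; lia.
Qed.

Lemma swap0_lift2 : forall v, swap 0 (lift 0 (lift 0 v)) = lift 0 (lift 0 v).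
Proof. intros. rewrite swap_ren, !lift0_ren, !ren_comp. apply ren_ext. reflexivity. Qed.

Lemma merge_lift2 : forall v, ren (merge 0) (lift 0 (lift 0 v)) = lift 0 v.
Proof. intros. rewrite !lift0_ren, !ren_comp. apply ren_ext. reflexivity. Qed.

Lemma ren_swap0 : forall t f, ren (up (up f)) (swap 0 t) = swap 0 (ren (up (up f)) t).
Proof. intros. rewrite !swap_ren, !ren_comp. apply ren_ext. intros [|[|n]]; reflexivity. Qed.

Lemma occ_lift0_0 : forall s, occ 0 (lift 0 s) = 0.
Proof. intros. rewrite lift0_ren. apply occ_ren_out. intros; discriminate. Qed.
Lemma occ_lift0_S : forall s n, occ (S n) (lift 0 s) = occ n s.
Proof. intros. rewrite lift0_ren. apply occ_ren_inj' with (f := S); auto. Qed.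
Lemma occ_lift2_1 : forall v, occ 1 (lift 0 (lift 0 v)) = 0.
Proof. intros. rewrite !lift0_ren, ren_comp. apply occ_ren_out. intros; discriminate. Qed.

Lemma swapv_inj : forall d m m', swapv d m = swapv d m' -> m = m'.
Proof. intros d m m' H. unfold swapv in H. dec; lia. Qed.

Lemma occ_swap0 : forall t n, occ (swapv 0 n) (swap 0 t) = occ n t.
Proof. intros. rewrite swap_ren. apply occ_ren_inj. intros m H; eapply swapv_inj; eauto. Qed.
Lemma occ_swap0_0 : forall t, occ 0 (swap 0 t) = occ 1 t.
Proof. intros. apply (occ_swap0 t 1). Qed.
Lemma occ_swap0_1 : forall t, occ 1 (swap 0 t) = occ 0 t.
Proof. intros. apply (occ_swap0 t 0). Qed.
Lemma occ_swap0_SS : forall t n, occ (S (S n)) (swap 0 t) = occ (S (S n)) t.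
Proof. intros. apply (occ_swap0 t (S (S n))). Qed.
Lemma occ_sw10 : forall t, occ 1 (swap 1 (swap 0 t)) = occ 2 t.
Proof.
  intros. rewrite !swap_ren, ren_comp. apply (occ_ren_inj' t _ 2 1); auto.
  intros m m' H. apply swapv_inj in H. apply swapv_inj in H. auto.
Qed.
Lemma occ_sw01 : forall t, occ 2 (swap 0 (swap 1 t)) = occ 1 t.
Proof.
  intros. rewrite !swap_ren, ren_comp. apply (occ_ren_inj' t _ 1 2); auto.
  intros m m' H. apply swapv_inj in H. apply swapv_inj in H. auto.
Qed.

Lemma SP1 : forall t', ren (merge 0) (swap 1 (swap 0 t')) = swap 0 (ren (up (merge 0)) t').
Proof. intros. rewrite !swap_ren, !ren_comp. apply ren_ext. intros [|[|[|n]]]; reflexivity. Qed.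
Lemma SP2 : forall t', ren (up (merge 0)) (swap 0 (swap 1 t')) = swap 0 (ren (merge 0) t').
Proof. intros. rewrite !swap_ren, !ren_comp. apply ren_ext. intros [|[|[|n]]]; reflexivity. Qed.

Lemma lift0_step : forall s s', lj_step s s' -> lj_step (lift 0 s) (lift 0 s').
Proof. intros. rewrite !lift0_ren. apply lj_step_ren; auto. Qed.
Lemma swap0_step : forall s s', lj_step s s' -> lj_step (swap 0 s) (swap 0 s').
Proof. intros. rewrite !swap_ren. apply lj_step_ren; auto. Qed.

Lemma cs_sym : forall a b, cs_ax a b -> cs_ax b a.
Proof.
  intros a b []. pose proof (cs_perm (swap 0 t) v s). rewrite swap_inv in H. auto.
Qed.


Lemma subst_swap0_back : forall t u, subst 1 u (swap 0 t) = subst 0 u t.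
Proof. intros. rewrite <- subst_swap, swap_inv. reflexivity. Qed.

Ltac occs := simpl occ in *;
  rewrite ?occ_lift0_0, ?occ_lift2_1, ?occ_swap0_0, ?occ_swap0_1, ?occ_sw10, ?occ_sw01 in *; lia.

Ltac getsplit := match goal with Hsp : Defs.split _ _ _ |- _ => apply split_iff in Hsp end.

Lemma cs_half : forall R, (forall a b, cs_ax a b -> R a b) -> forall t s v,
  half R (Sub (Sub t (lift 0 s)) v) (Sub (Sub (swap 0 t) (lift 0 v)) s).
Proof.
  intros R HR t s v w Hs. inversion Hs; subst.
  -
    inversion H; subst.
    + eexists; split. apply s_subl, s_root, r_w. occs.
      simpl. rewrite subst_lift0, subst_swap. apply e_refl.
    + eexists; split. apply s_subl, s_root, r_d. occs.
      simpl. rewrite subst_lift0, subst_swap. apply e_refl.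
    + rename t' into T'. getsplit. match goal with Hsp : ren _ T' = _ |- _ =>
      destruct (ren_inv_Sub _ _ _ _ Hsp) as [t' [S' [-> [Ht HS]]]] end.
      symmetry in HS. apply S_eq in HS. subst S' t.
      exists (Sub (Sub (Sub (swap 1 (swap 0 t')) (lift 0 (lift 0 v))) (lift 0 v)) s). split.
      * apply s_subl, s_root, r_c.
        -- occs.
        -- apply split_iff. apply SP1.
        -- occs.
        -- occs.
      * eapply e_trans. apply e_subl, e_base, HR, (cs_perm t' (lift 0 s) (lift 0 v)).
        apply e_base, HR. generalize (cs_perm (Sub (swap 0 t') (lift 0 (lift 0 v))) s v).
        simpl. rewrite swap0_lift2. auto.
  -
    match goal with Hx : lj_step (Sub t (lift 0 s)) _ |- _ => inversion Hx; subst end.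
    + match goal with Hx : lj_root (Sub t (lift 0 s)) _ |- _ => inversion Hx; subst end.
      * eexists; split. apply s_root, r_w. occs.
        simpl. rewrite subst_lift0, subst_swap0_back. apply e_refl.
      * eexists; split. apply s_root, r_d. occs.
        simpl. rewrite subst_lift0, subst_swap0_back. apply e_refl.
      * getsplit. subst t. match goal with |- context [Sub (Sub ?x (lift 0 (lift 0 s))) _] => rename x into t' end.
        exists (Sub (Sub (Sub (swap 0 (swap 1 t')) (lift 0 (lift 0 v))) (lift 0 s)) s). split.
        -- apply s_root, r_c.
           ++ occs.
           ++ apply split_iff. simpl. rewrite SP2, merge_lift2. reflexivity.
           ++ occs.
           ++ occs.
        -- eapply e_trans. apply e_base, HR.
           generalize (cs_perm (Sub t' (lift 0 (lift 0 s))) s v). simpl. rewrite swap0_lift2. intro X; exact X.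
           apply e_subl, e_base, HR, (cs_perm (swap 1 t') (lift 0 s) (lift 0 v)).
    + eexists; split. apply s_subl, s_subl, swap0_step; eauto. apply e_base, HR, cs_perm.
    + match goal with Hx : lj_step (lift 0 s) _ |- _ => destruct (lift0_step_inv _ _ Hx) as [s' [Hs' ->]] end.
      eexists; split. apply s_subr; eauto. apply e_base, HR, cs_perm.
  - eexists; split. apply s_subl, s_subr, lift0_step; eauto. apply e_base, HR, cs_perm.
Qed.


Lemma cs_ren : forall a b f, cs_ax a b -> cs_ax (ren f a) (ren f b).
Proof.
  intros a b f []. simpl. rewrite !ren_lift0, ren_swap0. apply cs_perm.
Qed.

Lemma cs_subst : forall a b k w, cs_ax a b -> cs_ax (subst k w a) (subst k w b).
Proof.
  intros a b k w []. simpl. rewrite !subst_lift0_comm, subst_swap0_comm by apply swap0_lift2.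
  apply cs_perm.
Qed.

Lemma cs_occ : forall a b n, cs_ax a b -> occ n a = occ n b.
Proof.
  intros a b n []. simpl. rewrite !occ_lift0_S, occ_swap0_SS. lia.
Qed.

Lemma cs_inv1 : forall t f q, cs_ax (ren f t) q -> exists q0, cs_ax t q0 /\ q = ren f q0.
Proof.
  intros t f q H. inversion H; subst.
  destruct (ren_inv_Sub _ _ _ _ (eq_sym H1)) as [x [v0 [-> [Hx ->]]]].
  symmetry in Hx. destruct (ren_inv_Sub _ _ _ _ Hx) as [x1 [y1 [-> [-> Hy]]]].
  symmetry in Hy. destruct (lift_inv _ _ _ Hy) as [s0 [-> ->]].
  exists (Sub (Sub (swap 0 x1) (lift 0 v0)) s0). split. apply cs_perm.
  simpl. rewrite ren_lift0, ren_swap0. reflexivity.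
Qed.

Lemma cs_inv2 : forall t f p, cs_ax p (ren f t) -> exists p0, cs_ax p0 t /\ p = ren f p0.
Proof.
  intros t f p H. apply cs_sym in H. destruct (cs_inv1 _ _ _ H) as [q [H1 H2]].
  exists q; split; auto. apply cs_sym; auto.
Qed.

Lemma cs_root : forall R, (forall a b, cs_ax a b -> R a b) -> forall a b, cs_ax a b -> half R a b /\ half R b a.
Proof.
  intros R HR a b []. split. apply cs_half; auto.
  pose proof (cs_half R HR (swap 0 t) v s). rewrite swap_inv in H. auto.
Qed.


Lemma swap0_upn_liftn : forall n V, ren (upn n (swapv 0)) (liftn (S (S n)) V) = liftn (S (S n)) V.
Proof.
  intros. rewrite liftn_ren, ren_comp. apply ren_ext. intros m. rewrite upn_spec. dec; try lia.
  replace (S (S n) + m - n) with (S (S m)) by lia. unfold swapv. simpl. lia.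
Qed.

Lemma cs_dB : forall R, (forall a b, cs_ax a b -> R a b) -> forall a L u,
  cs_ax (jumps (Lam a) L) u -> exists a' L', u = jumps (Lam a') L' /\
     forall v, ctx_equiv R (jumps (Sub a (liftn (length L) v)) L) (jumps (Sub a' (liftn (length L') v)) L').
Proof.
  intros R HR a L u H. inversion H; subst.
  destruct (jumps_Sub_inv _ _ _ _ (eq_sym H1)) as [L0 [-> H2]].
  destruct (jumps_Sub_inv _ _ _ _ (eq_sym H2)) as [L1 [-> ->]].
  exists (ren (up (upn (length L1) (swapv 0))) a), ((renL (swapv 0) L1 ++ [lift 0 v]) ++ [s]).
  split.
  - rewrite !jumps_app1. rewrite swap_ren, ren_jumps. reflexivity.
  - intros V. rewrite !jumps_app1, !length_app, length_renL. simpl.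
    replace (jumps (Sub (ren (up (upn (length L1) (swapv 0))) a) (liftn (length L1 + 1 + 1) V)) (renL (swapv 0) L1))
      with (swap 0 (jumps (Sub a (liftn (length L1 + 1 + 1) V)) L1)).
    apply e_base, HR, cs_perm.
    rewrite swap_ren, ren_jumps. simpl. f_equal. f_equal.
    rewrite !Nat.add_1_r. apply swap0_upn_liftn.
Qed.

Lemma good_cs : good cs_ax.
Proof.
  constructor.
  - apply cs_ren.
  - apply cs_subst.
  - apply cs_occ.
  - apply cs_inv1.
  - apply cs_inv2.
  - apply cs_root; auto.
  - intros a L u [H|H]. apply cs_dB; auto. apply cs_dB; auto. apply cs_sym; auto.
Qed.


Lemma o_ren : forall a b f, o_ax a b -> o_ax (ren f a) (ren f b).
Proof.
  intros a b f H. destruct H.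
  - apply o_cs, cs_ren; auto.
  - simpl. rewrite ren_lift0, ren_swap0. apply o_lam.
  - simpl. rewrite ren_lift0. apply o_app.
Qed.

Lemma o_subst : forall a b k w, o_ax a b -> o_ax (subst k w a) (subst k w b).
Proof.
  intros a b k w H. destruct H.
  - apply o_cs, cs_subst; auto.
  - simpl. rewrite subst_lift0_comm, subst_swap0_comm by apply swap0_lift2. apply o_lam.
  - simpl. rewrite subst_lift0_comm. apply o_app.
Qed.

Lemma o_occ : forall a b n, o_ax a b -> occ n a = occ n b.
Proof.
  intros a b n H. destruct H.
  - apply cs_occ; auto.
  - simpl. rewrite occ_lift0_S, occ_swap0_SS. lia.
  - simpl. rewrite occ_lift0_S. lia.
Qed.

Lemma o_inv1 : forall t f q, o_ax (ren f t) q -> exists q0, o_ax t q0 /\ q = ren f q0.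
Proof.
  intros t f q H. inversion H; subst.
  - destruct (cs_inv1 _ _ _ H0) as [q0 [H1 H2]]. exists q0; split; auto. apply o_cs; auto.
  - destruct (ren_inv_Lam _ _ _ (eq_sym H1)) as [x [-> Hx]].
    symmetry in Hx. destruct (ren_inv_Sub _ _ _ _ Hx) as [x1 [y1 [-> [-> Hy]]]].
    symmetry in Hy. destruct (lift_inv _ _ _ Hy) as [s0 [-> ->]].
    exists (Sub (Lam (swap 0 x1)) s0). split. apply o_lam.
    simpl. rewrite ren_swap0. reflexivity.
  - destruct (ren_inv_App _ _ _ _ (eq_sym H1)) as [x [v0 [-> [Hx ->]]]].
    symmetry in Hx. destruct (ren_inv_Sub _ _ _ _ Hx) as [x1 [s0 [-> [-> ->]]]].
    exists (Sub (App x1 (lift 0 v0)) s0). split. apply o_app.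
    simpl. rewrite ren_lift0. reflexivity.
Qed.

Lemma o_inv2 : forall t f p, o_ax p (ren f t) -> exists p0, o_ax p0 t /\ p = ren f p0.
Proof.
  intros t f p H. inversion H; subst.
  - destruct (cs_inv2 _ _ _ H0) as [q0 [H1 H2]]. exists q0; split; auto. apply o_cs; auto.
  - match goal with Hq : _ = ren f t |- _ => rename Hq into Heq end.
    destruct (ren_inv_Sub _ _ _ _ (eq_sym Heq)) as [x [s0 [-> [Hx ->]]]].
    symmetry in Hx. destruct (ren_inv_Lam _ _ _ Hx) as [x1 [-> Hy]].
    exists (Lam (Sub (swap 0 x1) (lift 0 s0))). split.
    + pose proof (o_lam (swap 0 x1) s0). rewrite swap_inv in H0. auto.
    + simpl. rewrite ren_lift0, ren_swap0, <- Hy, swap_inv. reflexivity.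
  - match goal with Hq : _ = ren f t |- _ => rename Hq into Heq end.
    destruct (ren_inv_Sub _ _ _ _ (eq_sym Heq)) as [x [s0 [-> [Hx ->]]]].
    symmetry in Hx. destruct (ren_inv_App _ _ _ _ Hx) as [x1 [y1 [-> [-> Hy]]]].
    symmetry in Hy. destruct (lift_inv _ _ _ Hy) as [v0 [-> ->]].
    exists (App (Sub x1 s0) v0). split. apply o_app. reflexivity.
Qed.

Lemma o_dB : forall a L u, symR o_ax (jumps (Lam a) L) u -> exists a' L', u = jumps (Lam a') L' /\
     forall v, ctx_equiv o_ax (jumps (Sub a (liftn (length L) v)) L) (jumps (Sub a' (liftn (length L') v)) L').
Proof.
  intros a L u [H|H]; inversion H; subst;
  try match goal with Hq : _ = jumps _ _ |- _ => symmetry in Hq; rename Hq into Heq end.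
  - apply cs_dB; auto. intros; apply o_cs; auto.
  - destruct (jumps_Lam_inv _ _ _ Heq) as [-> ->].
    exists (swap 0 t), [s]. split; auto. intros v. simpl. apply e_base, o_cs, cs_perm.
  - exfalso; eapply jumps_App_inv; eauto.
  - apply cs_dB; auto. intros; apply o_cs; auto. apply cs_sym; auto.
  - destruct (jumps_Sub_inv _ _ _ _ Heq) as [L0 [-> H3]].
    destruct (jumps_Lam_inv _ _ _ (eq_sym H3)) as [-> ->].
    exists (Sub t (lift 0 s)), []. split; auto. intros v. simpl. apply e_base, o_cs, cs_sym, cs_perm.
  - destruct (jumps_Sub_inv _ _ _ _ Heq) as [L0 [-> H3]].
    exfalso; eapply jumps_App_inv; eauto.
Qed.


Lemma lam_chain : forall t' s,
  ctx_equiv o_ax (Lam (Sub (Sub t' (lift 0 (lift 0 s))) (lift 0 s)))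
                 (Sub (Sub (Lam (swap 0 (swap 1 t'))) (lift 0 s)) s).
Proof.
  intros. eapply e_trans. apply e_base.
  generalize (o_lam (Sub t' (lift 0 (lift 0 s))) s). simpl. rewrite swap0_lift2. intro X; exact X.
  apply e_subl, e_base, (o_lam (swap 1 t') (lift 0 s)).
Qed.

Lemma app_chain : forall t' s v,
  ctx_equiv o_ax (App (Sub (Sub t' (lift 0 s)) s) v)
                 (Sub (Sub (App t' (lift 0 (lift 0 v))) (lift 0 s)) s).
Proof.
  intros. eapply e_trans. apply e_base, (o_app (Sub t' (lift 0 s)) s v).
  apply e_subl, e_base, (o_app t' (lift 0 s) (lift 0 v)).
Qed.

Lemma lam_half1 : forall t s, half o_ax (Lam (Sub t (lift 0 s))) (Sub (Lam (swap 0 t)) s).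
Proof.
  intros t s w Hs. inversion Hs; subst.
  - inversion H.
  - match goal with Hx : lj_step (Sub t (lift 0 s)) _ |- _ => inversion Hx; subst end.
    + match goal with Hx : lj_root (Sub t (lift 0 s)) _ |- _ => inversion Hx; subst end.
      * eexists; split. apply s_root, r_w. occs.
        simpl. rewrite subst_swap0_back. apply e_refl.
      * eexists; split. apply s_root, r_d. occs.
        simpl. rewrite subst_swap0_back. apply e_refl.
      * getsplit. subst t.
        match goal with |- context [Sub (Sub ?x (lift 0 (lift 0 s))) _] => rename x into t' end.
        exists (Sub (Sub (Lam (swap 0 (swap 1 t'))) (lift 0 s)) s). split.
        -- apply s_root, r_c.
           ++ occs.
           ++ apply split_iff. simpl. rewrite SP2. reflexivity.
           ++ occs.
           ++ occs.
        -- apply lam_chain.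
    + eexists; split. apply s_subl, s_lam, swap0_step; eauto. apply e_base, o_lam.
    + match goal with Hx : lj_step (lift 0 s) _ |- _ => destruct (lift0_step_inv _ _ Hx) as [s' [Hs' ->]] end.
      eexists; split. apply s_subr; eauto. apply e_base, o_lam.
Qed.

Lemma lam_half2 : forall t s, half o_ax (Sub (Lam (swap 0 t)) s) (Lam (Sub t (lift 0 s))).
Proof.
  intros t s w Hs. inversion Hs; subst.
  - inversion H; subst.
    + eexists; split. apply s_lam, s_root, r_w. occs.
      simpl. rewrite subst_swap0_back. apply e_refl.
    + eexists; split. apply s_lam, s_root, r_d. occs.
      simpl. rewrite subst_swap0_back. apply e_refl.
    + rename t' into T. getsplit.
      match goal with Hq : ren _ T = _ |- _ => destruct (ren_inv_Lam _ _ _ Hq) as [t'' [-> Ht]] end.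
      set (t' := swap 1 (swap 0 t'')).
      assert (E1 : ren (merge 0) t' = t). { unfold t'. rewrite SP1, <- Ht, swap_inv. reflexivity. }
      assert (E2 : t'' = swap 0 (swap 1 t')). { unfold t'. rewrite !swap_inv. reflexivity. }
      assert (E3 : occ 1 t' = occ 2 t''). { unfold t'. apply occ_sw10. }
      exists (Lam (Sub (Sub t' (lift 0 (lift 0 s))) (lift 0 s))). split.
      * apply s_lam, s_root, r_c.
        -- occs.
        -- apply split_iff; auto.
        -- rewrite E3. occs.
        -- rewrite E3. occs.
      * rewrite E2. apply e_sym, lam_chain.
  - match goal with Hx : lj_step (Lam (swap 0 t)) _ |- _ => inversion Hx; subst end.
    + match goal with Hx : lj_root (Lam _) _ |- _ => inversion Hx end.
    + match goal with Hx : lj_step (swap 0 t) ?w0 |- _ => rename w0 into w1; pose proof (swap0_step _ _ Hx) as Hy end.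
      rewrite swap_inv in Hy.
      exists (Lam (Sub (swap 0 w1) (lift 0 s))). split. apply s_lam, s_subl; auto.
      apply e_sym. generalize (o_lam (swap 0 w1) s). rewrite swap_inv. apply e_base.
  - eexists; split. apply s_lam, s_subr, lift0_step; eauto. apply e_sym, e_base, o_lam.
Qed.


Lemma app_half1 : forall t s v, half o_ax (App (Sub t s) v) (Sub (App t (lift 0 v)) s).
Proof.
  intros t s v w Hs. inversion Hs; subst.
  - inversion H; subst.
    match goal with Hq : jumps _ _ = Sub t s |- _ => destruct (jumps_Sub_inv _ _ _ _ Hq) as [L0 [-> ->]] end.
    eexists; split. apply s_subl, s_root, r_dB.
    rewrite jumps_app1, length_app, Nat.add_1_r, <- liftn_S. apply e_refl.
  - match goal with Hx : lj_step (Sub t s) _ |- _ => inversion Hx; subst end.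
    + match goal with Hx : lj_root (Sub t s) _ |- _ => inversion Hx; subst end.
      * eexists; split. apply s_root, r_w. occs.
        simpl. rewrite subst_lift0. apply e_refl.
      * eexists; split. apply s_root, r_d. occs.
        simpl. rewrite subst_lift0. apply e_refl.
      * getsplit. subst t.
        match goal with |- context [Sub (Sub ?x (lift 0 s)) s] => rename x into t' end.
        exists (Sub (Sub (App t' (lift 0 (lift 0 v))) (lift 0 s)) s). split.
        -- apply s_root, r_c.
           ++ occs.
           ++ apply split_iff. simpl. rewrite merge_lift2. reflexivity.
           ++ occs.
           ++ occs.
        -- apply app_chain.
    + eexists; split. apply s_subl, s_appl; eauto. apply e_base, o_app.
    + eexists; split. apply s_subr; eauto. apply e_base, o_app.
  - eexists; split. apply s_subl, s_appr, lift0_step; eauto. apply e_base, o_app.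
Qed.

Lemma app_half2 : forall t s v, half o_ax (Sub (App t (lift 0 v)) s) (App (Sub t s) v).
Proof.
  intros t s v w Hs. inversion Hs; subst.
  - inversion H; subst.
    + eexists; split. apply s_appl, s_root, r_w. occs.
      simpl. rewrite subst_lift0. apply e_refl.
    + eexists; split. apply s_appl, s_root, r_d. occs.
      simpl. rewrite subst_lift0. apply e_refl.
    + rename t' into T. getsplit.
      match goal with Hq : ren _ T = _ |- _ => destruct (ren_inv_App _ _ _ _ Hq) as [t' [V' [-> [Ht HV]]]] end.
      symmetry in HV. apply S_eq in HV. subst V' t.
      exists (App (Sub (Sub t' (lift 0 s)) s) v). split.
      * apply s_appl, s_root, r_c.
        -- occs.
        -- apply split_iff; auto.
        -- occs.
        -- occs.
      * apply e_sym, app_chain.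
  - match goal with Hx : lj_step (App t (lift 0 v)) _ |- _ => inversion Hx; subst end.
    + match goal with Hx : lj_root (App t (lift 0 v)) _ |- _ => inversion Hx; subst end.
      eexists; split.
      rewrite <- jumps_app1. apply s_root, r_dB.
      rewrite jumps_app1, length_app, Nat.add_1_r, <- liftn_S. apply e_refl.
    + eexists; split. apply s_appl, s_subl; eauto. apply e_sym, e_base, o_app.
    + match goal with Hx : lj_step (lift 0 v) _ |- _ => destruct (lift0_step_inv _ _ Hx) as [v' [Hv' ->]] end.
      eexists; split. apply s_appr; eauto. apply e_sym, e_base, o_app.
  - eexists; split. apply s_appl, s_subr; eauto. apply e_sym, e_base, o_app.
Qed.

Lemma o_root : forall a b, o_ax a b -> half o_ax a b /\ half o_ax b a.
Proof.
  intros a b H. destruct H.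
  - apply cs_root; auto. intros; apply o_cs; auto.
  - split; [apply lam_half1|apply lam_half2].
  - split; [apply app_half1|apply app_half2].
Qed.

Lemma good_o : good o_ax.
Proof.
  constructor.
  - apply o_ren.
  - apply o_subst.
  - apply o_occ.
  - apply o_inv1.
  - apply o_inv2.
  - apply o_root.
  - apply o_dB.
Qed.

Theorem lemma23 :
  strong_bisimulation lj_step equiv_CS /\ strong_bisimulation lj_step equiv_o.
Proof.
  split; [apply good_bisim, good_cs | apply good_bisim, good_o].
Qed.
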